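(* Let $(K,C,S)$ be a layered simplicial complex and let $(K,C,S)\searrow(K-\{f,p\},C-\{f,p\},S)$ be an elementary $C$-collapse of a principal simplex $p\in C$ using the free face $f\in C$ of $p$. Then the freely orthogonal deformation retraction $H:|K|\times I\to|K|$ associated to $p$ and $f$ satisfies $H_t(|K|-|S|)\subseteq|K|-|S|$ and $H_t(|S|)=|S|$ for all $t\in I$.
   Context: A simplicial complex is a set of finite nonempty sets (simplices) closed under passing to nonempty subsets (faces); $|K|$ is its geometric realization and $|s|$ the closed geometric simplex. A simplex is principal in $K$ if it is not a proper face of any simplex of $K$; $f$ is free in $K$ if it is a proper face of a principal simplex $p$ and of no other simplex of $K$. A layered simplicial complex is $(K,C,S)$ with $C,S$ disjoint subcomplexes of $K$. An elementary $C$-collapse uses $p\in C$ principal in $K$ and a face $f$ of $p$ free in $K$. Freely orthogonal deformation retraction: let $p$ be principal in $K$ with free face $f$, let $v$ be the vertex of $p$ not in $f$ and $f_1,\dots,f_m$ the vertices of $f$ ($m\ge1$). Identify $|p|$ via barycentric coordinates with $\{x\in\mathbb R^m: x_i\ge0,\ \sum x_i\le1\}$ ($v\mapsto0$, $f_i\mapsto e_i$). Define $r:|p|\to|p|$ by $r(x)=(x_1-x_j,\dots,x_m-x_j)$ where $x_j=\min\{x_1,\dots,x_m\}$, and $H:|K|\times I\to|K|$ by $H(x,t)=(1-t)x+t\,r(x)$ for $x\in|p|$ and $H(x,t)=x$ for $x\in|K|-|p|$; $H_t=H(\cdot,t)$. *)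

(* Defs.v *)
From mathcomp Require Import all_boot all_order all_algebra.
Set Implicit Arguments. Unset Strict Implicit. Unset Printing Implicit Defensive.
Import Order.TTheory GRing.Theory Num.Theory.
Local Open Scope ring_scope.

Section Simplicial.
Variable V : finType.

Definition is_complex (K : {set {set V}}) : Prop :=
  (forall s : {set V}, s \in K -> s != set0) /\
  (forall s t : {set V}, s \in K -> t \subset s -> t != set0 -> t \in K).

Definition subcomplex (L K : {set {set V}}) : Prop :=
  is_complex L /\ L \subset K.

Definition layered (K C S : {set {set V}}) : Prop :=
  [/\ is_complex K, subcomplex C K, subcomplex S K & [disjoint C & S]].

Definition principal (K : {set {set V}}) (p : {set V}) : Prop :=
  p \in K /\ (forall s : {set V}, s \in K -> ~~ (p \proper s)).

Definition free_face (K : {set {set V}}) (f p : {set V}) : Prop :=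
  [/\ principal K p, f \in K, f \proper p &
      (forall s : {set V}, s \in K -> f \proper s -> s = p)].

Definition elementary_C_collapse (K C : {set {set V}}) (p f : {set V}) : Prop :=
  [/\ p \in C, f \in C, principal K p & free_face K f p].

Variable R : realFieldType.

(** Points of |K| are given by barycentric coordinates x : V -> R.
    x lies in the closed geometric simplex |s|. *)
Definition in_simplex (s : {set V}) (x : V -> R) : bool :=
  [&& [forall u, 0 <= x u], \sum_u x u == 1 &
      [forall u, (u \notin s) ==> (x u == 0)]].

Definition realization (K : {set {set V}}) (x : V -> R) : Prop :=
  exists2 s, s \in K & in_simplex s x.

(** The retraction r of |p| (p = f ∪ {v}) in barycentric coordinates:
    r(x)_{f_i} = x_{f_i} - min_j x_{f_j}, and the v-coordinate is
    1 - sum_i r(x)_{f_i} = x_v + m * min_j x_{f_j}, m = #|f|.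
    (The min is taken with initial value 1, which is harmless as all
    coordinates of a point of |p| are <= 1 and f is nonempty.) *)
Definition fo_retract (f : {set V}) (v : V) (x : V -> R) : V -> R :=
  let mu := \big[Num.min/1]_(u in f) x u in
  fun u => if u \in f then x u - mu
           else if u == v then x v + #|f|%:R * mu else x u.

Definition fo_homotopy (p f : {set V}) (v : V) (x : V -> R) (t : R) : V -> R :=
  if in_simplex p x then (fun u => (1 - t) * x u + t * fo_retract f v x u)
  else x.

End Simplicial.

(* Main.v *)
Require Import Defs.
From mathcomp Require Import all_boot all_order all_algebra.
From mathcomp Require Import ring.
Import Order.TTheory GRing.Theory Num.Theory.
Local Open Scope ring_scope.

Section H.
Variables (R : realFieldType) (V : finType).

Lemma in_simplexP (s : {set V}) (x : V -> R) :
  in_simplex s x ->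
  [/\ forall u, 0 <= x u, \sum_u x u = 1 & forall u, u \notin s -> x u = 0].
Proof.
case/and3P=> /forallP H1 /eqP H2 /forallP H3; split=> // u Hu.
by apply/eqP; move: (H3 u); rewrite Hu.
Qed.

Lemma in_simplexI (s : {set V}) (x : V -> R) :
  (forall u, 0 <= x u) -> \sum_u x u = 1 -> (forall u, u \notin s -> x u = 0) ->
  in_simplex s x.
Proof.
move=> H1 H2 H3; apply/and3P; split; first by apply/forallP.
  by apply/eqP.
by apply/forallP=> u; apply/implyP=> Hu; rewrite H3.
Qed.

Lemma convex_in (s : {set V}) (a b : V -> R) (t : R) :
  0 <= t <= 1 -> in_simplex s a -> in_simplex s b ->
  in_simplex s (fun u => (1 - t) * a u + t * b u).
Proof.
case/andP=> t0 t1 /in_simplexP [a0 a1 a2] /in_simplexP [b0 b1 b2].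
apply: in_simplexI.
- move=> u; apply: addr_ge0; apply: mulr_ge0 => //; by rewrite subr_ge0.
- by rewrite big_split /= -!mulr_sumr a1 b1 !mulr1 subrK.
- by move=> u Hu; rewrite a2 // b2 // !mulr0 addr0.
Qed.

Lemma retract_in (p f : {set V}) (v : V) (x : V -> R) :
  f \subset p -> v \in p -> v \notin f -> in_simplex p x ->
  in_simplex p (fo_retract f v x).
Proof.
move=> fp vp vf /in_simplexP [x0 x1 x2].
set mu := \big[Num.min/1]_(u in f) x u.
have mule : forall u, u \in f -> mu <= x u.
  by move=> u uf; rewrite /mu (bigD1 u) //= ge_min lexx.
have mu0 : 0 <= mu.
  rewrite /mu; apply: (big_ind (fun m => 0 <= m)) => //.
  by move=> a b a0 b0; rewrite le_min a0 b0.
rewrite /fo_retract -/mu.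
apply: in_simplexI.
- move=> u; case: ifP => uf; first by rewrite subr_ge0 mule.
  case: ifP => _ //; apply: addr_ge0 => //; exact: mulr_ge0.
- have D : forall F : V -> R, \sum_u F u =
      \sum_(u in f) F u + (F v + \sum_(u | (u \notin f) && (u != v)) F u).
    move=> F; rewrite (bigID (mem f)) /=; congr (_ + _).
    by rewrite (bigD1 v) //=.
  transitivity (\sum_u x u); last exact: x1.
  rewrite !D eqxx (negbTE vf).
  have E1 : \sum_(i in f) (if i \in f then x i - mu else if i == v then x v + #|f|%:R * mu else x i)
     = \sum_(i in f) x i - mu *+ #|f|.
    transitivity (\sum_(i in f) (x i - mu)); first by apply: eq_bigr => i ->.
    by rewrite sumrB sumr_const.
  have E2 : \sum_(i | (i \notin f) && (i != v)) (if i \in f then x i - mu else if i == v then x v + #|f|%:R * mu else x i)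
     = \sum_(i | (i \notin f) && (i != v)) x i.
    by apply: eq_bigr => i /andP [/negbTE -> /negbTE ->].
  rewrite E1 E2 -mulr_natl; ring.
- move=> u up.
  have uf : u \notin f by apply: contra up; apply: (subsetP fp).
  have uv : u != v by apply: contraNneq up => ->.
  by rewrite (negbTE uf) (negbTE uv) x2.
Qed.

End H.

Theorem lemma5p4 (R : realFieldType) (V : finType)
    (K C S : {set {set V}}) (p f : {set V}) (v : V) :
  layered K C S ->
  elementary_C_collapse K C p f ->
  p :\: f = [set v] ->
  forall t : R, 0 <= t <= 1 ->
    (forall x : V -> R, realization K x -> ~ realization S x ->
       realization K (fo_homotopy p f v x t) /\
       ~ realization S (fo_homotopy p f v x t)) /\
    (forall y : V -> R, realization S y <->
       exists2 x : V -> R, realization S x & fo_homotopy p f v x t = y).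
Proof.
case=> isK [isC CK] [isS SK] dis [pC fC [pK _] [_ fK fp _]] pfv t ht.
have vpf : v \in p :\: f by rewrite pfv set11.
move: (vpf); rewrite inE => /andP [vf vp].
have fsp := proper_sub fp.
have disj : forall x : V -> R, in_simplex p x -> ~ realization S x.
  move=> x xp [s sS xs].
  case/in_simplexP: xp => x0 x1 x2.
  case/in_simplexP: xs => _ _ x3.
  set sup := [set u | x u != 0].
  have sup0 : sup != set0.
    apply/set0Pn; apply/existsP; apply: contraT; rewrite negb_exists => /forallP H.
    have : \sum_u x u = 0.
      by apply: big1 => u _; move: (H u); rewrite inE negbK => /eqP.
    by rewrite x1 => /eqP; rewrite oner_eq0.
  have sups : sup \subset s.
    by apply/subsetP=> u; rewrite inE; apply: contraR => us; rewrite x3.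
  have supp : sup \subset p.
    by apply/subsetP=> u; rewrite inE; apply: contraR => us; rewrite x2.
  have supS : sup \in S by case: isS => _ H; exact: H sS sups sup0.
  have supC : sup \in C by case: isC => _ H; exact: H pC supp sup0.
  by rewrite (disjointFr dis supC) in supS.
have fix1 : forall x : V -> R, realization S x -> fo_homotopy p f v x t = x.
  move=> x xS; rewrite /fo_homotopy; case: ifP => // xp.
  by case: (disj x xp xS).
split.
  move=> x xK xS; rewrite /fo_homotopy; case: ifP => xp; last by split.
  have hin : in_simplex p (fun u => (1 - t) * x u + t * fo_retract f v x u).
    apply: convex_in => //; exact: retract_in.
  by split; [exists p | apply: disj].
move=> y; split.
  by move=> yS; exists y => //; rewrite fix1.
by case=> x xS <-; rewrite fix1.
Qed.
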